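(* Consider the single-task common ground mechanism (context), under the assumption that $X_A$ and $X_B$ are independent conditional on $Y$. Then truth-telling is a Bayesian Nash equilibrium; if moreover the prior is stable, truth-telling is a strict Bayesian Nash equilibrium (for every $x_A$, given that Bob is truthful, any report $\hat{\mathbf{p}}_{x_A}\ne\mathbf{p}_{x_A}$ yields Alice strictly smaller conditional expected payment, and symmetrically for Bob). Moreover, when both agents are truthful, each agent's expected payment equals the Shannon mutual information $I(X_A;X_B)=\sum_{x_A,x_B}\Pr[X_A=x_A,X_B=x_B]\log K(x_A,x_B)\ge 0$.
   Context: Let $\Sigma_A,\Sigma_B,\Sigma$ be finite nonempty sets and $(X_A,X_B,Y)$ random variables with values in $\Sigma_A\times\Sigma_B\times\Sigma$ (joint law = the prior), with all marginal probabilities positive. $\Delta_\Sigma$ is the set of probability vectors on $\Sigma$. $K(x_A,x_B):=\frac{\Pr[X_A=x_A,X_B=x_B]}{\Pr[X_A=x_A]\Pr[X_B=x_B]}$. Alice privately observes $X_A=x_A$, Bob observes $X_B=x_B$; their truthful reports are $\mathbf{p}_{x_A}:=(\Pr[Y=y\mid X_A=x_A])_y$ and $\mathbf{p}_{x_B}:=(\Pr[Y=y\mid X_B=x_B])_y$. A strategy maps the private signal to a (possibly random) report in $\Delta_\Sigma$. Common ground mechanism: given the prior $(\Pr[Y=y])_y$ and reports $\hat{\mathbf{p}}_{x_A},\hat{\mathbf{p}}_{x_B}$, both agents are paid $\log\sum_y\frac{\hat{\mathbf{p}}_{x_A}(y)\hat{\mathbf{p}}_{x_B}(y)}{\Pr[Y=y]}$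 (with $\log 0=-\infty$). Stable prior: consider the system in unknowns $\mathbf{a}^{x_A},\mathbf{b}^{x_B},\mathbf{r}\in\Delta_\Sigma$: $\sum_y a^{x_A}_yb^{x_B}_y/r_y=K(x_A,x_B)$ for all $(x_A,x_B)$. The prior is stable if, with $\mathbf{a}^{x_A}=\mathbf{p}_{x_A}$ for all $x_A$ and $\mathbf{r}=(\Pr[Y=y])_y$ fixed, the unique solution $\{\mathbf{b}^{x_B}\}$ is $\mathbf{b}^{x_B}=\mathbf{p}_{x_B}$, and with $\mathbf{b}^{x_B}=\mathbf{p}_{x_B}$ and $\mathbf{r}=(\Pr[Y=y])_y$ fixed, the unique solution $\{\mathbf{a}^{x_A}\}$ is $\mathbf{a}^{x_A}=\mathbf{p}_{x_A}$. *)

(* Defs.v *)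
From Stdlib Require Import Reals.
From mathcomp Require Import all_boot.
Set Implicit Arguments. Unset Strict Implicit. Unset Printing Implicit Defensive.

Local Open Scope R_scope.

Definition rsum (T : finType) (f : T -> R) : R := \big[Rplus/R0]_(t : T) f t.

(* Extended reals R ∪ {-oo}, needed since log 0 = -oo. *)
Inductive xreal := Fin (r : R) | MInf.

Definition xle (a b : xreal) : Prop :=
  match a, b with
  | MInf, _ => True
  | Fin _, MInf => False
  | Fin x, Fin y => x <= y
  end.

Definition xlt (a b : xreal) : Prop :=
  match a, b with
  | MInf, MInf => False
  | MInf, Fin _ => True
  | Fin _, MInf => False
  | Fin x, Fin y => x < y
  end.

Definition xadd (a b : xreal) : xreal :=
  match a, b with
  | Fin x, Fin y => Fin (x + y)
  | _, _ => MInf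
  end.

(* nonnegative weight times extended real, with the convention 0 * (-oo) = 0 *)
Definition xscale (w : R) (a : xreal) : xreal :=
  if Req_EM_T w 0 then Fin 0 else
  match a with Fin x => Fin (w * x) | MInf => MInf end.

Definition xsum (T : finType) (f : T -> xreal) : xreal :=
  \big[xadd/Fin 0]_(t : T) f t.

(* log with log 0 = -oo (applied to nonnegative arguments only) *)
Definition xlog (x : R) : xreal :=
  if Rlt_dec 0 x then Fin (ln x) else MInf.

Definition ProbVec (T : finType) (p : T -> R) : Prop :=
  (forall t, 0 <= p t) /\ rsum p = 1.

Section Model.
Variables (TA TB TY : finType) (P : TA -> TB -> TY -> R).

Definition is_prior : Prop :=
  (forall a b y, 0 <= P a b y) /\
  rsum (fun a => rsum (fun b => rsum (fun y => P a b y))) = 1.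

Definition PA (a : TA) : R := rsum (fun b => rsum (fun y => P a b y)).
Definition PB (b : TB) : R := rsum (fun a => rsum (fun y => P a b y)).
Definition PY (y : TY) : R := rsum (fun a => rsum (fun b => P a b y)).
Definition PAB (a : TA) (b : TB) : R := rsum (fun y => P a b y).
Definition PAY (a : TA) (y : TY) : R := rsum (fun b => P a b y).
Definition PBY (b : TB) (y : TY) : R := rsum (fun a => P a b y).

Definition positive_marginals : Prop :=
  (forall a, 0 < PA a) /\ (forall b, 0 < PB b) /\ (forall y, 0 < PY y).

Definition cond_indep : Prop :=
  forall a b y, P a b y * PY y = PAY a y * PBY b y.

Definition pA (a : TA) (y : TY) : R := PAY a y / PA a.
Definition pB (b : TB) (y : TY) : R := PBY b y / PB b.

Definition K (a : TA) (b : TB) : R := PAB a b / (PA a * PB b).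

Definition score (qa qb : TY -> R) : R := rsum (fun y => qa y * qb y / PY y).
Definition payment (qa qb : TY -> R) : xreal := xlog (score qa qb).

Definition ExpPayA (a : TA) (q : TY -> R) : xreal :=
  xsum (fun b => xscale (PAB a b / PA a) (payment q (pB b))).

Definition ExpPayB (b : TB) (q : TY -> R) : xreal :=
  xsum (fun a => xscale (PAB a b / PB b) (payment (pA a) q)).

Definition ExpPayTruthful : xreal :=
  xsum (fun a => xsum (fun b => xscale (PAB a b) (payment (pA a) (pB b)))).

(* Shannon mutual information I(X_A;X_B) (terms with PAB = 0 vanish) *)
Definition MI : R := rsum (fun a => rsum (fun b => PAB a b * ln (K a b))).

Definition stable : Prop :=
  ((forall a b, score (pA a) (pB b) = K a b) /\
   forall bb : TB -> TY -> R,
     (forall b, ProbVec (bb b)) ->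
     (forall a b, score (pA a) (bb b) = K a b) ->
     forall b, bb b = pB b) /\
  ((forall a b, score (pA a) (pB b) = K a b) /\
   forall aa : TA -> TY -> R,
     (forall a, ProbVec (aa a)) ->
     (forall a b, score (aa a) (pB b) = K a b) ->
     forall a, aa a = pA a).

End Model.

(* Main.v *)
Require Import Defs.
From Stdlib Require Import Reals.
From mathcomp Require Import all_boot.
From Stdlib Require Import Lra Classical.
From HB Require Import structures.
Set Implicit Arguments. Unset Strict Implicit.
Local Open Scope R_scope.

HB.instance Definition _ := Monoid.isComLaw.Build R 0 Rplus (fun x y z => esym (Rplus_assoc x y z)) Rplus_comm Rplus_0_l.

Lemma xadd_assoc : associative xadd.
Proof. by case=> [x|] [y|] [z|] //=; rewrite Rplus_assoc. Qed.
Lemma xadd_comm : commutative xadd.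
Proof. by case=> [x|] [y|] //=; rewrite Rplus_comm. Qed.
Lemma xadd_0l : left_id (Fin 0) xadd.
Proof. by case=> [x|] //=; rewrite Rplus_0_l. Qed.
HB.instance Definition _ := Monoid.isComLaw.Build xreal (Fin 0) xadd xadd_assoc xadd_comm xadd_0l.

Lemma ln_le_sub1 x : 0 < x -> ln x <= x - 1.
Proof. move=> hx; have := exp_ineq1_le (ln x); rewrite exp_ln //; lra. Qed.
Lemma ln_lt_sub1 x : 0 < x -> x <> 1 -> ln x < x - 1.
Proof.
move=> hx hx1; have h : ln x <> 0.
  by move=> h; apply: hx1; rewrite -(exp_ln x hx) h exp_0.
have := exp_ineq1 (ln x) h; rewrite exp_ln //; lra.
Qed.

Lemma rsum_le (T : finType) (g h : T -> R) : (forall t, g t <= h t) -> rsum g <= rsum h.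
Proof. move=> H; rewrite /rsum; apply: (big_ind2 (fun x y => x <= y)) => //.
  lra. move=> *; lra. Qed.
Lemma rsum_lt (T : finType) (g h : T -> R) t0 : (forall t, g t <= h t) -> g t0 < h t0 -> rsum g < rsum h.
Proof. move=> H H0; rewrite /rsum (bigD1 t0) //= [X in _ < X](bigD1 t0) //=.
apply: Rplus_lt_le_compat => //.
apply: (big_ind2 (fun x y => x <= y)) => //. lra. move=> *; lra. Qed.
Lemma rsum_split (T : finType) (g h : T -> R) : rsum (fun t => g t + h t) = rsum g + rsum h.
Proof. exact: big_split. Qed.
Lemma rsum_mulr (T : finType) (g : T -> R) k : rsum (fun t => g t * k) = rsum g * k.
Proof. rewrite /rsum; apply: (big_ind2 (fun x y => x = y * k)) => //.
  lra. move=> ? ? ? ? -> ->; lra. Qed.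
Lemma rsum_ge0 (T : finType) (g : T -> R) : (forall t, 0 <= g t) -> 0 <= rsum g.
Proof. move=> H; rewrite /rsum; apply: (big_ind (fun x => 0 <= x)) => //. lra. move=> *; lra. Qed.
Lemma rsum_exch (T1 T2 : finType) (g : T1 -> T2 -> R) :
  rsum (fun a => rsum (fun b => g a b)) = rsum (fun b => rsum (fun a => g a b)).
Proof. exact: exchange_big. Qed.
Lemma rsum_ext (T : finType) (g h : T -> R) : (forall t, g t = h t) -> rsum g = rsum h.
Proof. by move=> H; apply: eq_bigr. Qed.

Lemma xsum_fin (T : finType) (F : T -> xreal) g : (forall t, F t = Fin (g t)) -> xsum F = Fin (rsum g).
Proof. move=> H; rewrite /xsum /rsum; apply: (big_ind2 (fun x y => x = Fin y)) => //.
by move=> ? ? ? ? -> ->. Qed.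
Lemma xsum_minf (T : finType) (F : T -> xreal) t0 : F t0 = MInf -> xsum F = MInf.
Proof. by move=> H; rewrite /xsum (bigD1 t0) //= H. Qed.

Lemma key_le w c f : 0 <= w -> 0 < c -> 0 <= f -> (0 < w -> 0 < f) ->
  w * ln f + w <= w * ln (w / c) + c * f.
Proof.
move=> hw hc hf hwf; case: (Rle_lt_or_eq_dec 0 w hw) => [wp|<-]; last first.
  have := Rmult_le_pos _ _ (Rlt_le _ _ hc) hf; lra.
have fp := hwf wp.
have e : ln f - ln (w / c) = ln (f * c / w).
  rewrite /Rdiv !ln_mult ?ln_Rinv //; try apply: Rinv_0_lt_compat => //;
  try apply: Rmult_lt_0_compat => //. lra.
have h : ln (f * c / w) <= f * c / w - 1 by apply: ln_le_sub1; apply: Rdiv_lt_0_compat => //; nra.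
have : w * (ln f - ln (w / c)) <= w * (f * c / w - 1).
  rewrite e; apply: Rmult_le_compat_l => //; lra.
have -> : w * (f * c / w - 1) = c * f - w by field; lra.
lra.
Qed.

Lemma key_lt w c f : 0 <= w -> 0 < c -> 0 <= f -> (0 < w -> 0 < f) -> f <> w / c ->
  w * ln f + w < w * ln (w / c) + c * f.
Proof.
move=> hw hc hf hwf hne; case: (Rle_lt_or_eq_dec 0 w hw) => [wp|w0]; last first.
  subst w. case: (Rle_lt_or_eq_dec 0 f hf) => [fp|h]; last first.
    exfalso; apply: hne; rewrite -h /Rdiv Rmult_0_l; reflexivity.
  have := Rmult_lt_0_compat _ _ hc fp; lra.
have fp := hwf wp.
have e : ln f - ln (w / c) = ln (f * c / w).
  rewrite /Rdiv !ln_mult ?ln_Rinv //; try apply: Rinv_0_lt_compat => //;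
  try apply: Rmult_lt_0_compat => //. lra.
have ne1 : f * c / w <> 1.
  move=> h; apply: hne.
  have h2 : f * c = f * c / w * w by field; lra.
  rewrite h Rmult_1_l in h2; rewrite -h2; field; lra.
have h : ln (f * c / w) < f * c / w - 1 by apply: ln_lt_sub1 => //; apply: Rdiv_lt_0_compat => //; nra.
have : w * (ln f - ln (w / c)) < w * (f * c / w - 1).
  rewrite e; apply: Rmult_lt_compat_l => //; lra.
have -> : w * (f * c / w - 1) = c * f - w by field; lra.
lra.
Qed.

Lemma xscale_fin w a : (w <> 0 -> xlog a = Fin (ln a)) -> xscale w (xlog a) = Fin (w * ln a).
Proof.
rewrite /xscale; case: (Req_EM_T w 0) => [e|hw] H /=; first by rewrite e Rmult_0_l.
by rewrite H.
Qed.

Lemma xlog_pos a : 0 < a -> xlog a = Fin (ln a).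
Proof. by rewrite /xlog; case: (Rlt_dec 0 a). Qed.

Lemma core (T : finType) (w c f : T -> R) :
  (forall t, 0 <= w t) -> rsum w = 1 -> (forall t, 0 < c t) -> (forall t, 0 <= f t) ->
  rsum (fun t => c t * f t) = 1 ->
  xle (xsum (fun t => xscale (w t) (xlog (f t)))) (xsum (fun t => xscale (w t) (xlog (w t / c t)))) /\
  ((exists t, f t <> w t / c t) ->
   xlt (xsum (fun t => xscale (w t) (xlog (f t)))) (xsum (fun t => xscale (w t) (xlog (w t / c t))))).
Proof.
move=> hw sw hc hf scf.
rewrite (@xsum_fin _ (fun t => xscale (w t) (xlog (w t / c t))) (fun t => w t * ln (w t / c t))); last first.
  move=> t; apply: xscale_fin => h; apply: xlog_pos.
  apply: Rdiv_lt_0_compat => //. have := hw t; lra.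
case: (classic (exists t, w t <> 0 /\ f t <= 0)) => [[t [h1 h2]]|hno].
  rewrite (@xsum_minf _ _ t) //.
  rewrite /xscale; case: (Req_EM_T (w t) 0) => [//|hne] /=.
  by rewrite /xlog; case: (Rlt_dec 0 (f t)) => // ?; exfalso; lra.
have pos : forall t, 0 < w t -> 0 < f t.
  move=> t wt; case: (Rlt_le_dec 0 (f t)) => // h; exfalso; apply: hno; exists t; split=> //; lra.
rewrite (@xsum_fin _ _ (fun t => w t * ln (f t))); last first.
  move=> t; apply: xscale_fin => h; apply: xlog_pos; apply: pos; have := hw t; lra.
have base : forall t, w t * ln (f t) + w t <= w t * ln (w t / c t) + c t * f t.
  move=> t; exact: (key_le (hw t) (hc t) (hf t) (pos t)).
split.
  rewrite /=; have := rsum_le base; rewrite !rsum_split sw scf; lra.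
move=> [t0 ht0] /=.
have := rsum_lt base (key_lt (hw t0) (hc t0) (hf t0) (pos t0) ht0).
rewrite !rsum_split sw scf; lra.
Qed.

Section M.
Variables (TA TB TY : finType) (P : TA -> TB -> TY -> R).
Hypotheses (hp : is_prior P) (hm : positive_marginals P) (hci : cond_indep P).

Let P0 a b y : 0 <= P a b y. Proof. exact: hp.1. Qed.
Let PAp a : 0 < PA P a. Proof. exact: hm.1. Qed.
Let PBp b : 0 < PB P b. Proof. exact: hm.2.1. Qed.
Let PYp y : 0 < PY P y. Proof. exact: hm.2.2. Qed.

Lemma PAB0 a b : 0 <= PAB P a b. Proof. by apply: rsum_ge0. Qed.
Lemma PAY0 a y : 0 <= PAY P a y. Proof. by apply: rsum_ge0. Qed.
Lemma PBY0 b y : 0 <= PBY P b y. Proof. by apply: rsum_ge0. Qed.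

Lemma sumB_PBY y : rsum (fun b => PBY P b y) = PY P y.
Proof. by rewrite /PBY /PY rsum_exch. Qed.
Lemma sumY_PAY a : rsum (fun y => PAY P a y) = PA P a.
Proof. by rewrite /PAY /PA rsum_exch. Qed.
Lemma sumY_PBY b : rsum (fun y => PBY P b y) = PB P b.
Proof. by rewrite /PBY /PB rsum_exch. Qed.

Lemma score_truth a b : score P (pA P a) (pB P b) = K P a b.
Proof.
rewrite /score /K /PAB.
have := PAp a; have := PBp b => hb ha.
rewrite -[rsum (fun y => P a b y) / _]rsum_mulr.
apply: rsum_ext => y.
have hy := PYp y.
rewrite /pA /pB.
have e := hci a b y.
have -> : PAY P a y / PA P a * (PBY P b y / PB P b) / PY P y
   = (PAY P a y * PBY P b y) / (PA P a * PB P b * PY P y) by field; lra.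
rewrite -e; field; lra.
Qed.

Lemma pA_prob a : ProbVec (pA P a).
Proof.
split. move=> y; apply: Rmult_le_pos; [exact: PAY0| apply: Rlt_le; apply: Rinv_0_lt_compat; exact: PAp].
rewrite /pA /Rdiv rsum_mulr sumY_PAY; field; have := PAp a; lra.
Qed.
Lemma pB_prob b : ProbVec (pB P b).
Proof.
split. move=> y; apply: Rmult_le_pos; [exact: PBY0| apply: Rlt_le; apply: Rinv_0_lt_compat; exact: PBp].
rewrite /pB /Rdiv rsum_mulr sumY_PBY; field; have := PBp b; lra.
Qed.

Lemma normA (q : TY -> R) : rsum q = 1 ->
  rsum (fun b => PB P b * score P q (pB P b)) = 1.
Proof.
move=> sq; rewrite -sq.
have e : forall b, PB P b * score P q (pB P b) = rsum (fun y => PBY P b y * (q y / PY P y)).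
  move=> b; rewrite /score Rmult_comm -rsum_mulr; apply: rsum_ext => y.
  rewrite /pB; field; split; [have := PYp y| have := PBp b]; lra.
rewrite (rsum_ext e) rsum_exch; apply: rsum_ext => y.
rewrite rsum_mulr sumB_PBY; field; have := PYp y; lra.
Qed.

Lemma normB (q : TY -> R) : rsum q = 1 ->
  rsum (fun a => PA P a * score P (pA P a) q) = 1.
Proof.
move=> sq; rewrite -sq.
have e : forall a, PA P a * score P (pA P a) q = rsum (fun y => PAY P a y * (q y / PY P y)).
  move=> a; rewrite /score Rmult_comm -rsum_mulr; apply: rsum_ext => y.
  rewrite /pA; field; split; [have := PYp y| have := PAp a]; lra.
rewrite (rsum_ext e) rsum_exch; apply: rsum_ext => y.
rewrite rsum_mulr; change (rsum (fun a => PAY P a y)) with (PY P y); field; have := PYp y; lra.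
Qed.

End M.

Theorem mainTheorem6 (TA TB TY : finType) (P : TA -> TB -> TY -> R) :
  is_prior P -> positive_marginals P -> cond_indep P ->
  (* truth-telling is a Bayesian Nash equilibrium *)
  ((forall (a : TA) (q : TY -> R), ProbVec q ->
      xle (ExpPayA P a q) (ExpPayA P a (pA P a))) /\
   (forall (b : TB) (q : TY -> R), ProbVec q ->
      xle (ExpPayB P b q) (ExpPayB P b (pB P b)))) /\
  (* strict if the prior is stable *)
  (stable P ->
   (forall (a : TA) (q : TY -> R), ProbVec q -> q <> pA P a ->
      xlt (ExpPayA P a q) (ExpPayA P a (pA P a))) /\
   (forall (b : TB) (q : TY -> R), ProbVec q -> q <> pB P b ->
      xlt (ExpPayB P b q) (ExpPayB P b (pB P b)))) /\
  (* truthful expected payment equals the mutual information, which is >= 0 *)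
  (ExpPayTruthful P = Fin (MI P) /\ 0 <= MI P).
Proof.
move=> hp hm hci.
have PAp a : 0 < PA P a by exact: hm.1.
have PBp b : 0 < PB P b by exact: hm.2.1.
have PYp y : 0 < PY P y by exact: hm.2.2.
have coreA : forall a q, ProbVec q ->
  xle (ExpPayA P a q) (ExpPayA P a (pA P a)) /\
  ((exists b, score P q (pB P b) <> K P a b) -> xlt (ExpPayA P a q) (ExpPayA P a (pA P a))).
  move=> a q [q0 sq].
  have eT : ExpPayA P a (pA P a) =
     xsum (fun b => xscale (PAB P a b / PA P a) (xlog ((PAB P a b / PA P a) / PB P b))).
    rewrite /ExpPayA /payment /xsum; apply: eq_bigr => b _.
    rewrite score_truth // /K; congr (xscale _ (xlog _)); field.
    have := PBp b; have := PAp a; split; lra.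
  have hK : forall b, K P a b = (PAB P a b / PA P a) / PB P b.
    move=> b; rewrite /K; field; have := PBp b; have := PAp a; split; lra.
  rewrite eT.
  have := @core TB (fun b => PAB P a b / PA P a) (fun b => PB P b) (fun b => score P q (pB P b)).
  case.
  - move=> b; apply: Rmult_le_pos; [exact: PAB0| apply: Rlt_le; apply: Rinv_0_lt_compat; exact: PAp].
  - rewrite /Rdiv rsum_mulr; change (rsum (PAB P a)) with (PA P a).
    field; have := PAp a; lra.
  - exact: PBp.
  - move=> b; apply: rsum_ge0 => y; apply: Rmult_le_pos; last first.
      apply: Rlt_le; apply: Rinv_0_lt_compat; exact: PYp.
    apply: Rmult_le_pos; first exact: q0.
    exact: (pB_prob hp hm b).1.
  - exact: normA.
  move=> h1 h2; split; first exact: h1.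
  move=> [b hb]; apply: h2; exists b; by rewrite -hK.
have coreB : forall b q, ProbVec q ->
  xle (ExpPayB P b q) (ExpPayB P b (pB P b)) /\
  ((exists a, score P (pA P a) q <> K P a b) -> xlt (ExpPayB P b q) (ExpPayB P b (pB P b))).
  move=> b q [q0 sq].
  have eT : ExpPayB P b (pB P b) =
     xsum (fun a => xscale (PAB P a b / PB P b) (xlog ((PAB P a b / PB P b) / PA P a))).
    rewrite /ExpPayB /payment /xsum; apply: eq_bigr => a _.
    rewrite score_truth // /K; congr (xscale _ (xlog _)); field.
    have := PAp a; have := PBp b; split; lra.
  have hK : forall a, K P a b = (PAB P a b / PB P b) / PA P a.
    move=> a; rewrite /K; field; have := PAp a; have := PBp b; split; lra.
  rewrite eT.
  have := @core TA (fun a => PAB P a b / PB P b) (fun a => PA P a) (fun a => score P (pA P a) q).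
  case.
  - move=> a; apply: Rmult_le_pos; [exact: PAB0| apply: Rlt_le; apply: Rinv_0_lt_compat; exact: PBp].
  - rewrite /Rdiv rsum_mulr; change (rsum (fun a => PAB P a b)) with (PB P b).
    field; have := PBp b; lra.
  - exact: PAp.
  - move=> a; apply: rsum_ge0 => y; apply: Rmult_le_pos; last first.
      apply: Rlt_le; apply: Rinv_0_lt_compat; exact: PYp.
    apply: Rmult_le_pos; last exact: q0.
    exact: (pA_prob hp hm a).1.
  - exact: normB.
  move=> h1 h2; split; first exact: h1.
  move=> [a ha]; apply: h2; exists a; by rewrite -hK.
split.
  split=> [a q hq|b q hq]; [exact: (coreA a q hq).1 | exact: (coreB b q hq).1].
split.
  move=> [[_ stB] [_ stA]]; split.
  - move=> a q hq hne; apply: (coreA a q hq).2.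
    apply: NNPP => hall.
    have hall' : forall b, score P q (pB P b) = K P a b.
      by move=> b; apply: NNPP => h; apply: hall; exists b.
    apply: hne.
    have := stA (fun a' => if a' == a then q else pA P a').
    move=> /(_ _ _ a); rewrite eqxx; apply.
    + by move=> a'; case: (a' == a) => //; exact: pA_prob.
    + move=> a' b; case: (a' =P a) => [->|_]; first exact: hall'.
      exact: score_truth.
  - move=> b q hq hne; apply: (coreB b q hq).2.
    apply: NNPP => hall.
    have hall' : forall a, score P (pA P a) q = K P a b.
      by move=> a; apply: NNPP => h; apply: hall; exists a.
    apply: hne.
    have := stB (fun b' => if b' == b then q else pB P b').
    move=> /(_ _ _ b); rewrite eqxx; apply.
    + by move=> b'; case: (b' == b) => //; exact: pB_prob.
    + move=> a b'; case: (b' =P b) => [->|_]; first exact: hall'.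
      exact: score_truth.
have Kp : forall a b, 0 < PAB P a b -> 0 < K P a b.
  move=> a b h; apply: Rdiv_lt_0_compat => //; apply: Rmult_lt_0_compat; auto.
split.
  rewrite /ExpPayTruthful /MI.
  apply: xsum_fin => a; apply: xsum_fin => b.
  rewrite /payment score_truth //; apply: xscale_fin => h; apply: xlog_pos; apply: Kp.
  have := PAB0 hp a b; lra.
have base : forall a b, PAB P a b - PA P a * PB P b <= PAB P a b * ln (K P a b).
  move=> a b.
  have := @key_le (PAB P a b) (PA P a * PB P b) 1 (PAB0 hp a b)
    ltac:(apply: Rmult_lt_0_compat; auto) ltac:(lra) ltac:(move=> _; lra).
  rewrite ln_1 /K; lra.
have := rsum_le (fun a => rsum_le (base a)).
have e1 : rsum (fun a => rsum (fun b => PAB P a b - PA P a * PB P b)) = 0.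
  have -> : rsum (fun a => rsum (fun b => PAB P a b - PA P a * PB P b))
     = rsum (fun a => rsum (fun b => PAB P a b)) + rsum (fun a => - (PA P a * rsum (fun b => PB P b))).
    rewrite -rsum_split; apply: rsum_ext => a.
    rewrite /Rminus rsum_split; congr (_ + _).
    rewrite (_ : - (PA P a * rsum (fun b => PB P b)) = rsum (fun b => PB P b) * (- PA P a)); last by ring.
    rewrite -rsum_mulr; apply: rsum_ext => b; ring.
  have sB : rsum (fun b => PB P b) = 1 by rewrite /PB rsum_exch; exact: hp.2.
  rewrite sB.
  have -> : rsum (fun a => - (PA P a * 1)) = rsum (fun a => PA P a) * (-1).
    rewrite -rsum_mulr; apply: rsum_ext => a; ring.
  change (rsum (fun a => rsum (fun b => PAB P a b))) with (rsum (fun a => PA P a)).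
  have -> : rsum (fun a => PA P a) = 1 by exact: hp.2.
  ring.
rewrite e1 /MI; lra.
Qed.
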